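(* Let $P(u)=\sum_{\ell=1}^kc_\ell e^{-\lambda_\ell u}$ on $[0,\infty)$ with $0<\lambda_1<\dots<\lambda_k$ and nonzero reals $c_1,\dots,c_k$. Assume the sequence $c_1,\dots,c_k$ has at most two sign changes, $P(0)<0$, and $P(u)\to0$ from above as $u\to\infty$ (i.e. $P(u)>0$ for all sufficiently large $u$ and $\lim_{u\to\infty}P(u)=0$). Then there exists $u_0>0$ such that for every non-decreasing function $f$ on $[0,\infty)$ and every non-negative finite Borel measure $\nu$ on $[0,\infty)$ for which the integrals converge, $\int_0^\infty f(u)P(u)\,d\nu(u)\ge f(u_0)\int_0^\infty P(u)\,d\nu(u)$.
   Context: The number of sign changes of a finite sequence of nonzero reals is the number of consecutive pairs of entries with opposite signs. *)

(* Defs.v *)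
From HB Require Import structures.
From mathcomp Require Import all_boot all_order all_algebra.
From mathcomp Require Import all_classical all_reals all_analysis.
Set Implicit Arguments. Unset Strict Implicit. Unset Printing Implicit Defensive.
Import Order.TTheory GRing.Theory Num.Theory.
Local Open Scope ring_scope.

Definition sign_changes (R : realDomainType) (s : seq R) : nat :=
  \sum_(i < (size s).-1) (s`_i * s`_i.+1 < 0)%R.

Definition exp_poly (R : realType) (c lam : seq R) (u : R) : R :=
  \sum_(l < size c) c`_l * expR (- (lam`_l * u)).

(* Main.v *)
Require Import Defs.
From HB Require Import structures.
From mathcomp Require Import all_boot all_order all_algebra.
From mathcomp Require Import all_classical all_reals all_analysis.
From mathcomp Require Import lra.
Import Order.TTheory GRing.Theory Num.Theory numFieldNormedType.Exports.
Local Open Scope classical_set_scope.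
Local Open Scope ring_scope.
Definition F (R : realType) n (d r : nat -> R) (u : R) : R :=
  \sum_(l < n) d l * expR (r l * u).
Arguments F {R}.

Lemma is_derive_term (R : realType) (a b x : R) :
  is_derive x 1 (fun u => a * expR (b * u)) (a * b * expR (b * x)).
Proof.
have h1 : is_derive x 1 (fun u : R => b * u) b.
  have h0 := @is_deriveZ R R R (@id R) b x 1 1 (is_derive_id x 1).
  have -> : (fun u : R => b * u) = b \*: (@id R) by apply/funext.
  by apply: is_derive_eq h0 _; rewrite /GRing.scale /= mulr1.
have h2 := @is_derive1_comp R expR (fun u => b * u) x _ _ (is_derive_expR _) h1.
have h3 := @is_deriveZ R R R _ a x 1 _ h2.
have -> : (fun u : R => a * expR (b * u)) = a \*: (expR \o (fun u => b * u)) by apply/funext.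
apply: is_derive_eq h3 _.
rewrite /GRing.scale /=. by rewrite [expR _ * b]mulrC mulrA.
Qed.

Lemma is_derive_F (R : realType) (n : nat) (d r : nat -> R) (x : R) :
  is_derive x 1 (F n d r) (F n (fun l => d l * r l) r x).
Proof.
have -> : F n d r = \sum_(i < n) (fun u => d i * expR (r i * u)).
  by apply/funext => u; rewrite /F fct_sumE.
rewrite /F; apply: is_derive_sum => i; exact: is_derive_term.
Qed.

Lemma F_shift (R : realType) (n : nat) (d r : nat -> R) (s u : R) :
  F n d r u = expR (s * u) * F n d (fun l => r l - s) u.
Proof.
rewrite /F mulr_sumr; apply: eq_bigr => i _.
by rewrite mulrCA -expRD mulrBl addrCA subrr addr0.
Qed.

Lemma F_opp (R : realType) (n : nat) (d r : nat -> R) (u : R) :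
  F n (fun l => - d l) r u = - F n d r u.
Proof. by rewrite /F -sumrN; apply: eq_bigr => i _; rewrite mulNr. Qed.

Lemma F_mono (R : realType) (n : nat) (d r : nat -> R) :
  (forall l, (l < n)%N -> 0 <= d l * r l) ->
  forall x y, x <= y -> F n d r x <= F n d r y.
Proof.
move=> H x y xy; rewrite /F; apply: ler_sum => i _.
have := H i (ltn_ord i).
case: (ltrgtP (d i) 0) => hd hdr.
- have hr : r i <= 0 by nra.
  apply: ler_wnM2l; [exact: ltW| rewrite ler_expR; nra].
- have hr : 0 <= r i by nra.
  apply: ler_wpM2l; [exact: ltW| rewrite ler_expR; nra].
- by rewrite hd !mul0r.
Qed.

Lemma deriv_cont (R : realType) (g dg : R -> R) :
  (forall t : R, is_derive t 1 g (dg t)) -> forall a b : R, {within `[a, b], continuous g}.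
Proof.
move=> Hd a b; apply/continuous_subspaceT=> t.
apply/differentiable_continuous/derivable1_diffP.
by have [] := Hd t.
Qed.

Lemma quasi_conv (R : realType) (g dg : R -> R) :
  (forall t : R, is_derive t 1 g (dg t)) ->
  (forall s t, s <= t -> 0 <= dg s -> 0 <= dg t) ->
  forall x y z, x <= y -> y <= z -> g y <= g x \/ g y <= g z.
Proof.
move=> Hd Hm x y z xy yz.
have cont := @deriv_cont R g dg Hd.
case: (lerP 0 (dg y)) => hy.
- right.
  have [c + E] := MVT_segment yz (fun t _ => Hd t) (cont y z).
  rewrite in_itv /= => /andP[yc cz].
  have := Hm _ _ yc hy => hc.
  have : 0 <= dg c * (z - y) by apply: mulr_ge0 => //; lra.
  rewrite -E; lra.
- left.
  have [c + E] := MVT_segment xy (fun t _ => Hd t) (cont x y).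
  rewrite in_itv /= => /andP[xc cy].
  have hc : dg c <= 0.
    case: (lerP (dg c) 0) => // hc.
    have := Hm _ _ cy (ltW hc); lra.
  have : dg c * (y - x) <= 0 by apply: mulr_le0_ge0 => //; lra.
  rewrite -E; lra.
Qed.

Lemma thresh_real (R : realType) (n b : nat) (lf : nat -> R) :
  (forall i j, (i <= j)%N -> (j < n)%N -> lf i <= lf j) ->
  exists mu, (forall l, (l < n)%N -> (l < b)%N -> lf l <= mu) /\
             (forall l, (l < n)%N -> (b <= l)%N -> mu <= lf l).
Proof.
move=> Hm; case: (ltnP b n) => hb.
- exists (lf b); split => l ln lb.
  + by apply: Hm => //; apply: ltnW.
  + exact: Hm.
- exists (lf n.-1); split => l ln lb.
  + apply: Hm => //; case: n ln {hb} => // n0 ln /=.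
  + by have := leq_trans hb lb; rewrite leqNgt ln.
Qed.

Lemma analytic (R : realType) (n a b : nat) (c lf : nat -> R) :
  (a <= b)%N ->
  (forall i j, (i <= j)%N -> (j < n)%N -> lf i <= lf j) ->
  (forall l, (l < n)%N -> (l < a)%N || (b <= l)%N -> 0 <= c l) ->
  (forall l, (l < n)%N -> (a <= l)%N -> (l < b)%N -> c l <= 0) ->
  forall x y z : R, x <= y -> y <= z ->
   (F n c (fun l => - lf l) x <= 0 -> F n c (fun l => - lf l) z <= 0 ->
      F n c (fun l => - lf l) y <= 0) /\
   (F n c (fun l => - lf l) x < 0 -> F n c (fun l => - lf l) z < 0 ->
      F n c (fun l => - lf l) y < 0).
Proof.
move=> ab Hmono Hpos Hneg x y z xy yz.
have [mu [mu1 mu2]] := @thresh_real R n b lf Hmono.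
have [tau [tau1 tau2]] := @thresh_real R n a lf Hmono.
pose r l := - lf l - - mu.
pose Q := F n c r.
pose dg := F n (fun l => c l * r l) r.
have HP u : F n c (fun l => - lf l) u = expR (- mu * u) * Q u by apply: F_shift.
have Hd (t : R) : is_derive t 1 Q (dg t) by apply: is_derive_F.
have Hm (s t : R) : s <= t -> 0 <= dg s -> 0 <= dg t.
  move=> st; rewrite /dg (F_shift _ _ _ _ (mu - tau) s) (F_shift _ _ _ _ (mu - tau) t).
  rewrite !pmulr_rge0 ?expR_gt0 // => hs.
  apply: le_trans hs _; apply: F_mono => // l ln.
  have -> : r l = mu - lf l by rewrite /r; lra.
  have -> : mu - lf l - (mu - tau) = tau - lf l by lra.
  case: (ltnP l a) => la.
  - have h1 := Hpos l ln (introT orP (or_introl la)).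
    have h2 := mu1 l ln (leq_trans la ab).
    have h3 := tau1 l ln la.
    apply: mulr_ge0; [apply: mulr_ge0|]; lra.
  - have h3 := tau2 l ln la.
    case: (ltnP l b) => lb.
    + have h1 := Hneg l ln la lb.
      have h2 := mu1 l ln lb.
      rewrite -mulrA; apply: mulr_le0; [lra|apply: mulr_ge0_le0; lra].
    + have h1 := Hpos l ln (introT orP (or_intror lb)).
      have h2 := mu2 l ln lb.
      rewrite -mulrA; apply: mulr_ge0; [lra|apply: mulr_le0; lra].
have := @quasi_conv R Q dg Hd Hm _ _ _ xy yz.
rewrite !HP !pmulr_rle0 ?pmulr_rlt0 ?expR_gt0 //.
move=> H; split; lra.
Qed.

Definition SC (R : realType) (c : seq R) (m : nat) : nat :=
  \sum_(i < m) (c`_i * c`_i.+1 < 0)%R.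
Arguments SC {R}.

Lemma SC_rec (R : realType) (c : seq R) m :
  SC c m.+1 = (SC c m + (c`_m * c`_m.+1 < 0)%R)%N.
Proof. by rewrite /SC big_ord_recr. Qed.

Lemma SC_mono (R : realType) (c : seq R) m m' : (m <= m')%N -> (SC c m <= SC c m')%N.
Proof.
elim: m' => [|m' IH]; first by rewrite leqn0 => /eqP ->.
rewrite leq_eqVlt => /orP[/eqP -> //|]; rewrite ltnS => /IH h.
by rewrite SC_rec; apply: leq_trans h (leq_addr _ _).
Qed.

Lemma key_sign (R : realType) (x y z : R) : x != 0 -> y != 0 -> z != 0 ->
  (0 < x * z) = (0 < x * y) (+) (y * z < 0).
Proof.
move=> hx hy hz.
case: (ltrgtP x 0) => hx'; last (by rewrite hx' eqxx in hx);
  [rewrite !nmulr_rgt0 // | rewrite !pmulr_rgt0 //];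
  (case: (ltrgtP y 0) => hy'; last (by rewrite hy' eqxx in hy));
  [rewrite nmulr_rlt0 // | rewrite pmulr_rlt0 // | rewrite nmulr_rlt0 // | rewrite pmulr_rlt0 //];
  (case: (ltrgtP z 0) => hz'; last (by rewrite hz' eqxx in hz));
  by rewrite ?hy' ?hz' ?(lt_gtF hy') ?(lt_gtF hz').
Qed.

Lemma parity (R : realType) (c : seq R) : all (fun x => x != 0) c ->
  forall m, (m < size c)%N -> (0 < c`_0 * c`_m) = ~~ odd (SC c m).
Proof.
move=> /all_nthP Hnz; elim => [|m IH] hm.
  rewrite /SC big_ord0 /=.
  have h0 := Hnz 0 0 hm.
  by rewrite lt0r mulf_neq0 //= -expr2 sqr_ge0.
have hm' : (m < size c)%N by apply: ltnW.
have n0 : c`_0 != 0 by apply: (Hnz 0 0); apply: leq_ltn_trans hm.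
have n1 : c`_m != 0 by apply: (Hnz 0 m).
have n2 : c`_m.+1 != 0 by apply: (Hnz 0 m.+1).
rewrite (@key_sign R c`_0 c`_m c`_m.+1) // IH // SC_rec oddD.
by case: odd; case: (_ < 0).
Qed.

Lemma thresh_nat (P : pred nat) n :
  (forall i j, (i <= j)%N -> (j < n)%N -> P i -> P j) ->
  exists a, forall l, (l < n)%N -> P l = (a <= l)%N.
Proof.
elim: n => [|n IH] H; first by exists 0%N.
have [a Ha] : exists a, forall l, (l < n)%N -> P l = (a <= l)%N.
  by apply: IH => i j ij jn; apply: H => //; apply: ltnW.
case: (ltnP a n) => an.
- exists a => l; rewrite ltnS leq_eqVlt => /orP[/eqP ->|ln]; last exact: Ha.
  rewrite (ltnW an); apply: (H a) => //; first exact: ltnW.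
  by rewrite Ha // leqnn.
- exists (if P n then n else n.+1) => l; rewrite ltnS leq_eqVlt => /orP[/eqP ->|ln].
    by case: (P n); rewrite ?leqnn ?ltnn.
  rewrite Ha //; have : (l < a)%N by apply: leq_trans ln an.
  rewrite ltnNge => /negbTE ->.
  by case: (P n); apply/esym/negbTE; rewrite -ltnNge //; apply: ltnW.
Qed.

Lemma blocks (R : realType) (c : seq R) : all (fun x => x != 0) c ->
  (sign_changes c <= 2)%N ->
  exists a b : nat, (a <= b)%N /\ exists eps : R, (eps = 1 \/ eps = -1) /\
   (forall l, (l < size c)%N -> (l < a)%N || (b <= l)%N -> 0 <= eps * c`_l) /\
   (forall l, (l < size c)%N -> (a <= l)%N -> (l < b)%N -> eps * c`_l <= 0).
Proof.
move=> Hnz Hsc.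
have Hnz' := Hnz; move/all_nthP: Hnz' => Hnz'.
have SCle l : (l < size c)%N -> (SC c l <= 2)%N.
  move=> ln; apply: leq_trans Hsc; apply: (@SC_mono R c).
  by move: ln; case: (size c).
have mono (k : nat) : forall i j, (i <= j)%N -> (j < size c)%N ->
    (k < SC c i)%N -> (k < SC c j)%N.
  by move=> i j ij _ h; exact: leq_trans h (@SC_mono R c i j ij).
have [a Ha] := @thresh_nat (fun l => 0 < SC c l)%N (size c) (mono 0%N).
have [b Hb] := @thresh_nat (fun l => 1 < SC c l)%N (size c) (mono 1%N).
exists (minn a b), b; split; first exact: geq_minr.
case En: (size c) => [|n].
  by exists 1; split; [left|split => l].
have c0nz : c`_0 != 0 by apply: (Hnz' 0 0); rewrite En.
pose eps : R := if 0 < c`_0 then 1 else -1.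
have Heps l : (l < size c)%N ->
    (~~ odd (SC c l) -> 0 <= eps * c`_l) /\ (odd (SC c l) -> eps * c`_l <= 0).
  move=> ln; rewrite -[odd _]negbK -parity // negbK /eps.
  case: (ltrgtP c`_0 0) => h0; last by rewrite h0 eqxx in c0nz.
  - rewrite nmulr_rgt0 // -leNgt mulN1r; split => h; lra.
  - rewrite pmulr_rgt0 // -leNgt mul1r; split => h; lra.
exists eps; split.
  by rewrite /eps; case: (0 < _); [left|right].
rewrite -En; split.
- move=> l ln /orP[la|bl]; apply: (proj1 (Heps l ln)).
  + have : (0 < SC c l)%N = false.
      rewrite Ha //; apply/negbTE; rewrite -ltnNge.
      by apply: leq_trans la (geq_minl _ _).
    by case: (SC c l).
  + have h1 : (1 < SC c l)%N by rewrite Hb.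
    have h2 := SCle l ln.
    have -> : SC c l = 2%N by apply/eqP; rewrite eqn_leq h2 h1.
    by [].
- move=> l ln al lb; apply: (proj2 (Heps l ln)).
  have h1 : (1 < SC c l)%N = false by rewrite Hb //; apply/negbTE; rewrite -ltnNge.
  have h2 : (0 < SC c l)%N.
    rewrite Ha //; move: al; rewrite geq_min => /orP[//|bl].
    by move: lb; rewrite ltnNge bl.
  have -> : SC c l = 1%N by move: h1 h2; case: (SC c l) => [|[|]].
  by [].
Qed.

Lemma integ_part (R : realType) (nu : {finite_measure set R -> \bar R})
  (P g : R -> R) (k : R) :
  nu.-integrable `[0%R, +oo[ (fun u => (P u)%:E) ->
  nu.-integrable `[0%R, +oo[ (fun u => (g u)%:E) ->
  (forall u, 0 <= u -> k * P u <= g u) ->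
  ((k%:E * \int[nu]_(u in `[0%R, +oo[) (P u)%:E)
     <= \int[nu]_(u in `[0%R, +oo[) (g u)%:E)%E.
Proof.
move=> iP ig H.
have mD : measurable (`[0%R, +oo[ : set R) by [].
rewrite -integralZl //.
apply: le_integral => //; first exact: integrableZl.
move=> x; rewrite inE /= in_itv /= andbT => x0.
by rewrite -EFinM lee_fin; apply: H.
Qed.

Theorem mainTheorem12 (R : realType) (c lam : seq R) :
  size lam = size c ->
  sorted <%R lam ->
  all (fun x => 0 < x) lam ->
  all (fun x => x != 0) c ->
  (sign_changes c <= 2)%N ->
  exp_poly c lam 0 < 0 ->
  (\forall u \near +oo, 0 < exp_poly c lam u) ->
  exp_poly c lam u @[u --> +oo] --> 0 ->
  exists2 u0 : R, 0 < u0 &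
    forall (f : R -> R) (nu : {finite_measure set R -> \bar R}),
      (forall x y, 0 <= x -> x <= y -> f x <= f y) ->
      nu.-integrable `[0%R, +oo[ (fun u => (exp_poly c lam u)%:E) ->
      nu.-integrable `[0%R, +oo[ (fun u => (f u * exp_poly c lam u)%:E) ->
      ((f u0)%:E * \int[nu]_(u in `[0%R, +oo[) (exp_poly c lam u)%:E
        <= \int[nu]_(u in `[0%R, +oo[) (f u * exp_poly c lam u)%:E)%E.
Proof.
move=> hsz hsort _ hnz hsc hP0 hev _.
case: hev => M [_ HM].
set P := exp_poly c lam.
have HM' : forall x, M < x -> 0 < P x := HM.
have hP0' : P 0 < 0 := hP0.
have PF : P = F (size c) (nth 0 c) (fun l => - nth 0 lam l).
  apply/funext => u; rewrite /P /exp_poly /F; apply: eq_bigr => i _.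
  by rewrite mulNr.
have Hmono : forall i j, (i <= j)%N -> (j < size c)%N -> nth 0 lam i <= nth 0 lam j.
  move=> i j; rewrite leq_eqVlt => /orP[/eqP -> //|ij] jn.
  apply: ltW; apply: (sorted_ltn_nth lt_trans 0 hsort); rewrite ?inE ?hsz //.
  exact: ltn_trans ij jn.
have K : forall y z, 0 <= y -> y <= z -> P z < 0 -> P y < 0.
  move=> y z y0 yz Pz.
  have [a [b [ab [eps [heps [Hp Hn]]]]]] := @blocks R c hnz hsc.
  case: heps => E; subst eps.
  - have Hp' l : (l < size c)%N -> (l < a)%N || (b <= l)%N -> 0 <= nth 0 c l.
      by move=> ln h; have := Hp l ln h; rewrite mul1r.
    have Hn' l : (l < size c)%N -> (a <= l)%N -> (l < b)%N -> nth 0 c l <= 0.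
      by move=> ln h1 h2; have := Hn l ln h1 h2; rewrite mul1r.
    have [_ H] := @analytic R (size c) a b (nth 0 c) (nth 0 lam) ab Hmono Hp' Hn' 0 y z y0 yz.
    by rewrite PF; apply: H; rewrite -PF.
  - have Hp' l : (l < size c)%N -> (l < a)%N || (b <= l)%N -> 0 <= - nth 0 c l.
      by move=> ln h; have := Hp l ln h; rewrite mulN1r.
    have Hn' l : (l < size c)%N -> (a <= l)%N -> (l < b)%N -> - nth 0 c l <= 0.
      by move=> ln h1 h2; have := Hn l ln h1 h2; rewrite mulN1r.
    rewrite ltNge; apply/negP => Py.
    pose w := Num.max (M + 1) (z + 1).
    have zw : z <= w by rewrite /w le_max; apply/orP; right; lra.
    have Mw : M < w by rewrite /w lt_max; apply/orP; left; lra.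
    have Pw := HM w Mw.
    have [H _] := @analytic R (size c) a b (fun l => - nth 0 c l) (nth 0 lam) ab Hmono Hp' Hn' y z w yz zw.
    rewrite !F_opp -PF in H.
    have : - P z <= 0 by apply: H; move: Py Pw; rewrite /P => Py Pw; lra.
    lra.
pose N := [set u : R | 0 <= u /\ P u < 0].
have hsN : has_sup N.
  split; first by exists 0; split.
  exists (Num.max M 0) => u [u0 Pu]; rewrite le_max; apply/orP; left.
  rewrite leNgt; apply/negP => Mu; have := HM' u Mu; lra.
pose u0 := sup N.
have cP : {for 0, continuous P}.
  rewrite PF; apply: differentiable_continuous; apply/derivable1_diffP.
  by have [] := @is_derive_F R (size c) (nth 0 c) (fun l => - nth 0 lam l) 0.
have Hn : \forall t \near (0:R), P t < 0.
  by apply: (@cvgr_lt R R (nbhs (0:R)) _ P (P 0) cP 0 hP0').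
have [e /= e0 He] := (iffLR (nbhs_ballP (0:R) _) Hn).
have Pe : P (e / 2) < 0.
  apply: He; rewrite /ball /= sub0r normrN ger0_norm; lra.
have u0pos : 0 < u0.
  have : N (e / 2) by split => //; lra.
  move=> /(sup_upper_bound hsN) h; rewrite /u0; lra.
exists u0 => // f nu fmono iP ifP.
apply: integ_part => // u u0le.
case: (ltrgtP u u0) => hu.
- have [v [v0 Pv] uv] := sup_adherent (eps := u0 - u) (ltac:(lra)) hsN.
  have Pu := K u v u0le (ltac:(rewrite /u0 in uv; lra)) Pv.
  have fu := fmono u u0 u0le (ltW hu).
  nra.
- have nN : ~ N u by move=> Nu; have := sup_upper_bound hsN Nu; rewrite /u0 in hu; lra.
  have Pu : 0 <= P u by rewrite leNgt; apply/negP => Pu; apply: nN; split.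
  have fu := fmono u0 u (ltW u0pos) (ltW hu).
  nra.
- by rewrite hu.
Qed.
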